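(* Let $n\ge 3$ and let $x_1<x_2<\dots<x_n$ be nodes with data values $f_1,\dots,f_n$. Set $h_i=x_{i+1}-x_i$, $m_i=(f_{i+1}-f_i)/h_i$ for $1\le i\le n-1$, and $\lambda_i=\frac{h_{i+1}}{h_i+h_{i+1}}$, $\mu_i=\frac{h_i}{h_i+h_{i+1}}$ for $1\le i\le n-2$. Let $P$ be the cubic spline defined as follows. Given boundary values $\dot f_1,\dot f_n\in\mathbb{R}$, the interior derivative values $\dot f_2,\dots,\dot f_{n-1}$ are the unique solution of the linear system $$\lambda_i\dot f_i+2\dot f_{i+1}+\mu_i\dot f_{i+2}=3(\lambda_i m_i+\mu_i m_{i+1}),\qquad i=1,\dots,n-2,$$ in which $\dot f_1$ and $\dot f_n$ are regarded as known. On each interval $[x_i,x_{i+1}]$, $1\le i\le n-1$, $P$ coincides with the cubic polynomial $$P_i(x)=f_i+\dot f_i(x-x_i)+\frac{m_i-\dot f_i}{h_i}(x-x_i)^2+\frac{\dot f_{i+1}+\dot f_i-2m_i}{h_i^2}(x-x_i)^2(x-x_{i+1}).$$ Let $\widetilde P$, with pieces $\widetilde P_i$, be the cubic spline constructed in exactly the same way from the same nodes and data values $f_i$, but with boundary values $\dot{\widetilde f}_1\neq\dot f_1$ and $\dot{\widetilde f}_n\neq\dot f_n$. Its interior derivative values $\dot{\widetilde f}_2,\dots,\dot{\widetilde f}_{n-1}$ are obtained by solving the same system with these boundary values. Then for every $i$ with $2\le i\le n-2$ and every $x\in[x_i,x_{i+1}]$, $$|P_i(x)-\widetilde P_i(x)|\le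 8h_i\left(2^{-i}\lambda_1|\dot{\widetilde f}_1-\dot f_1|+\mu_{n-2}2^{i-n}|\dot{\widetilde f}_n-\dot f_n|\right).$$
   Context: The polynomial $P_i$ is the cubic Hermite interpolant on $[x_i,x_{i+1}]$. It satisfies $P_i(x_i)=f_i$, $P_i(x_{i+1})=f_{i+1}$, $P_i'(x_i)=\dot f_i$ and $P_i'(x_{i+1})=\dot f_{i+1}$. The linear system is exactly the condition that the second derivatives of consecutive pieces agree at the interior nodes, so the spline is $C^2$. The coefficient matrix of the system is strictly diagonally dominant, so the system has a unique solution. *)

(* Defs.v *)
From HB Require Import structures.
From mathcomp Require Import all_boot all_order all_algebra.
Set Implicit Arguments. Unset Strict Implicit. Unset Printing Implicit Defensive.
Import Order.TTheory GRing.Theory Num.Theory.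
Local Open Scope ring_scope.

(* Indices are 1-based as in the paper; nodes x, data f and derivative
   values df are functions nat -> R (only indices 1..n matter). *)
Section Spline.
Variable R : realFieldType.
Variables (x f : nat -> R).

Definition h (i : nat) : R := x i.+1 - x i.
Definition slope (i : nat) : R := (f i.+1 - f i) / h i.
Definition lam (i : nat) : R := h i.+1 / (h i + h i.+1).
Definition mu (i : nat) : R := h i / (h i + h i.+1).

Definition spline_system (n : nat) (df : nat -> R) : Prop :=
  forall i : nat, (1 <= i <= n - 2)%N ->
    lam i * df i + 2 * df i.+1 + mu i * df i.+2 =
    3 * (lam i * slope i + mu i * slope i.+1).

Definition Ppiece (df : nat -> R) (i : nat) (t : R) : R :=
  f i + df i * (t - x i)
  + (slope i - df i) / h i * (t - x i) ^+ 2
  + (df i.+1 + df i - 2 * slope i) / (h i ^+ 2) * (t - x i) ^+ 2 * (t - x i.+1).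

End Spline.

(* Main.v *)
Require Import Defs.
From HB Require Import structures.
From mathcomp Require Import all_boot all_order all_algebra.
From mathcomp Require Import ring lra zify.
Import Order.TTheory GRing.Theory Num.Theory.
Local Open Scope ring_scope.
Lemma final (R : realFieldType) (M a b lam mu L Rr: R) : 1 < M -> 0 < a -> 0 < b -> 0 < lam -> 0 < mu -> lam + mu = 1 ->
 (L <= lam*(M*(2*a+b/2)) \/ L = 3/2 * a) -> (Rr <= mu*(M*(a/2+2*b)) \/ Rr = 3/2 * b) -> 2*(M*(a+b)) <= L+Rr -> False.
Proof.
move=> M1 a0 b0 l0 m0 lm [HL|HL] [HR|HR] H.
- have Hl : lam = 1 - mu by lra. rewrite Hl in HL.
  have : 0 < M * ((1 - mu) * b + mu * a).
    apply: mulr_gt0; first lra. have : mu < 1 by lra. nra.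
  have E : (1 - mu) * (M * (2 * a + b / 2)) + mu * (M * (a / 2 + 2 * b)) - 2 * (M * (a + b))
     = -(3/2) * (M * ((1 - mu) * b + mu * a)) by field.
  lra.
- have Hl : lam = 1 - mu by lra. rewrite Hl in HL.
  have h1 : b < M * b by rewrite -subr_gt0 -[X in _ - X]mul1r -mulrBl mulr_gt0 // subr_gt0.
  have h2 : 0 < mu * (M * (2 * a + b / 2)) by rewrite !mulr_gt0 //; lra.
  have E : (1 - mu) * (M * (2 * a + b / 2)) = M * (2 * a) + (M * b) / 2 - mu * (M * (2 * a + b / 2)) by field.
  have E2 : 2 * (M * (a + b)) = 2 * (M * a) + 2 * (M * b) by ring.
  have E3 : M * (2 * a) = 2 * (M * a) by ring.
  lra.
- have Hm : mu = 1 - lam by lra. rewrite Hm in HR.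
  have h1 : a < M * a by rewrite -subr_gt0 -[X in _ - X]mul1r -mulrBl mulr_gt0 // subr_gt0.
  have h2 : 0 < lam * (M * (a / 2 + 2 * b)) by rewrite !mulr_gt0 //; lra.
  have E : (1 - lam) * (M * (a / 2 + 2 * b)) = M * (2 * b) + (M * a) / 2 - lam * (M * (a / 2 + 2 * b)) by field.
  have E2 : 2 * (M * (a + b)) = 2 * (M * a) + 2 * (M * b) by ring.
  have E3 : M * (2 * b) = 2 * (M * b) by ring.
  lra.
- have h1 : a < M * a by rewrite -subr_gt0 -[X in _ - X]mul1r -mulrBl mulr_gt0 // subr_gt0.
  have h3 : b < M * b by rewrite -subr_gt0 -[X in _ - X]mul1r -mulrBl mulr_gt0 // subr_gt0.
  have E2 : 2 * (M * (a + b)) = 2 * (M * a) + 2 * (M * b) by ring.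
  lra.
Qed.

Lemma exists_argmax (R : realDomainType) (F : nat -> R) (lo hi : nat) : (lo <= hi)%N ->
  exists k, (lo <= k <= hi)%N /\ forall j, (lo <= j <= hi)%N -> F j <= F k.
Proof.
elim: hi => [|hi IH] hle.
  exists lo; split; first by rewrite hle leqnn.
  move=> j /andP[h1 h2]; have -> : j = lo by apply/eqP; rewrite eqn_leq (leq_trans h2 (leq0n lo)) h1.
  by [].
case: (ltngtP lo hi.+1) hle => // [hlt|heq] _.
- have [k [/andP[hk1 hk2] hmax]] := IH hlt.
  case: (leP (F k) (F hi.+1)) => hc.
  + exists hi.+1; split; first by rewrite (ltnW hlt) leqnn.
    move=> j /andP[h1 h2]; rewrite leq_eqVlt in h2; case/orP: h2 => [/eqP->//|h2].
    by apply: le_trans hc; apply: hmax; rewrite h1.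
  + exists k; split; first by rewrite hk1 (leq_trans hk2).
    move=> j /andP[h1 h2]; rewrite leq_eqVlt in h2; case/orP: h2 => [/eqP->|h2].
    * exact: ltW.
    * by apply: hmax; rewrite h1.
- exists hi.+1; split; first by rewrite heq !leqnn.
  move=> j /andP[h1 h2]; have -> : j = hi.+1 by apply/eqP; rewrite eqn_leq h2 -heq h1.
  by [].
Qed.

Lemma decay (R : realFieldType) (n : nat) (e lam mu : nat -> R) (A B : R) :
  (3 <= n)%N ->
  (forall j, (1 <= j <= n-2)%N -> [/\ 0 < lam j, 0 < mu j & lam j + mu j = 1]) ->
  (forall j, (1 <= j <= n-2)%N -> lam j * e j + 2 * e j.+1 + mu j * e j.+2 = 0) ->
  0 < lam 1%N * `|e 1%N| -> 0 < mu (n-2)%N * `|e n| ->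
  A = 8/3 * (lam 1%N * `|e 1%N|) -> B = 4/3 * (mu (n-2)%N * `|e n|) / 2^+n ->
  forall j, (2 <= j <= n-1)%N -> `|e j| <= A / 2^+j + B * 2^+j.
Proof.
move=> n3 hlm heq hA0 hB0 hA hB.
pose w j := A / 2^+j + B * 2^+j.
have Ap : 0 < A by rewrite hA; lra.
have Bp : 0 < B by rewrite hB; apply: divr_gt0; [lra | exact: exprn_gt0].
have wp : forall j, 0 < w j.
  by move=> j; rewrite /w addr_gt0 // ?mulr_gt0 // ?invr_gt0 exprn_gt0.
have h2n : (2 <= n-1)%N.
  by case: n n3 {hlm heq hA0 hB0 hA hB w wp} => [|[|[|n]]].
have [k [hk hmax]] := @exists_argmax R (fun j => `|e j| / w j) 2 (n-1) h2n.
case: k hk hmax => [|k'] // hk hmax.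
suff M1 : `|e k'.+1| / w k'.+1 <= 1.
  move=> j hj; have := le_trans (hmax j hj) M1.
  by rewrite ler_pdivrMr // mul1r.
rewrite leNgt; apply/negP => M1.
set M := `|e k'.+1| / w k'.+1 in M1.
have hM : forall j, (2 <= j <= n-1)%N -> `|e j| <= M * w j.
  by move=> j hj; rewrite -ler_pdivrMr //; exact: hmax.
have ek : `|e k'.+1| = M * w k'.+1 by rewrite /M divfK // gt_eqF.
have hk' : (1 <= k' <= n - 2)%N.
  case/andP: hk => h1 h2; rewrite -ltnS h1 /=.
  by case: n n3 {hlm heq hA0 hB0 hA hB hmax hM ek h2n} h2 => [|[|[|n]]] //= _; rewrite subn1 subn2.
have [l0 m0 lm] := hlm k' hk'.
have H2 : 2 * `|e k'.+1| <= lam k' * `|e k'| + mu k' * `|e k'.+2|.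
  have E : 2 * e k'.+1 = - (lam k' * e k' + mu k' * e k'.+2).
    by apply/eqP; rewrite -subr_eq0 opprK; apply/eqP; rewrite -(heq k' hk'); ring.
  have : `|2 * e k'.+1| <= `|lam k' * e k'| + `|mu k' * e k'.+2|.
    by rewrite E normrN ler_normD.
  by rewrite !normrM (ger0_norm (ltW l0)) (ger0_norm (ltW m0)) (ger0_norm (_ : (0:R) <= 2)) //; lra.
pose p : R := 2 ^+ k'.
have pp : 0 < p by rewrite exprn_gt0.
pose a := A / (2 * p). pose b := 2 * B * p.
have ap : 0 < a by rewrite divr_gt0 // mulr_gt0.
have bp : 0 < b by rewrite !mulr_gt0.
have w1 : w k'.+1 = a + b.
  rewrite /w /a /b /p exprS /=; clear -A B k'; ring.
have w0 : w k' = 2 * a + b / 2.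
  rewrite /w /a /b /p /=; clear -A B k'; field; by rewrite expf_neq0 // pnatr_eq0.
have w2 : w k'.+2 = a / 2 + 2 * b.
  rewrite /w /a /b /p !exprS /=; clear -A B k'; field; by rewrite expf_neq0 // pnatr_eq0.
apply: (@final R M a b (lam k') (mu k') (lam k' * `|e k'|) (mu k' * `|e k'.+2|)) => //.
- case: (ltngtP k' 1%N) => hk2.
  + by clear -hk' hk2; lia.
  + left; rewrite ler_pM2l // -w0; apply: hM; clear -hk hk2; lia.
  + by right; rewrite /a /p hk2 hA expr1 /=; move: (lam 1%N * `|e 1%N|) => z; field.
- case: (ltngtP k'.+2 n) => hk3.
  + left; rewrite ler_pM2l // -w2; apply: hM; clear -hk3 hk; lia.
  + by clear -hk' hk3 n3; lia.
  + right; rewrite /b /p hB -hk3 (_ : (k'.+2 - 2 = k')%N); last by clear; lia.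
    rewrite !exprS; move: (mu k' * `|e k'.+2|) => z.
    field; by rewrite expf_neq0 // pnatr_eq0.
- by rewrite -w1 -ek.
Qed.

Theorem proposition1 (R : realFieldType) (n : nat) (x f df dft : nat -> R) :
  (3 <= n)%N ->
  (forall i : nat, (1 <= i < n)%N -> x i < x i.+1) ->
  spline_system x f n df ->
  spline_system x f n dft ->
  dft 1%N != df 1%N ->
  dft n != df n ->
  forall (i : nat) (t : R), (2 <= i <= n - 2)%N ->
    x i <= t <= x i.+1 ->
    `|Ppiece x f df i t - Ppiece x f dft i t|
      <= 8 * h x i * ((2 ^+ i)^-1 * lam x 1 * `|dft 1%N - df 1%N|
                      + mu x (n - 2) * (2 ^+ (n - i))^-1 * `|dft n - df n|).
Proof.
move=> n3 hx hdf hdft h1 hn i t hi ht.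
have hpos : forall j, (1 <= j < n)%N -> 0 < h x j.
  by move=> j hj; rewrite /h subr_gt0; apply: hx.
pose e j := dft j - df j.
have hlm : forall j, (1 <= j <= n-2)%N -> [/\ 0 < lam x j, 0 < mu x j & lam x j + mu x j = 1].
  move=> j hj.
  have p1 : 0 < h x j by apply: hpos; clear -hj n3; lia.
  have p2 : 0 < h x j.+1 by apply: hpos; clear -hj n3; lia.
  split; rewrite /lam /mu.
  - by apply: divr_gt0 => //; apply: addr_gt0.
  - by apply: divr_gt0 => //; apply: addr_gt0.
  - by field; rewrite gt_eqF // addr_gt0.
have heq : forall j, (1 <= j <= n-2)%N -> lam x j * e j + 2 * e j.+1 + mu x j * e j.+2 = 0.
  move=> j hj; have H1 := hdf j hj; have H2 := hdft j hj.
  transitivity ((lam x j * dft j + 2 * dft j.+1 + mu x j * dft j.+2)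
               - (lam x j * df j + 2 * df j.+1 + mu x j * df j.+2)).
    by rewrite /e; ring.
  by rewrite H1 H2 subrr.
have hA0 : 0 < lam x 1 * `|e 1%N|.
  have r1 : (1 <= 1 <= n - 2)%N by clear -n3; lia.
  have [l0 _ _] := hlm 1%N r1.
  by rewrite mulr_gt0 // normr_gt0 /e subr_eq0.
have hB0 : 0 < mu x (n - 2) * `|e n|.
  have r1 : (1 <= n - 2 <= n - 2)%N by clear -n3; lia.
  have [_ m0 _] := hlm (n - 2)%N r1.
  by rewrite mulr_gt0 // normr_gt0 /e subr_eq0.
have Dk := @decay R n e (lam x) (mu x) _ _ n3 hlm heq hA0 hB0 erefl erefl.
have r1 : (2 <= i <= n - 1)%N by clear -hi; lia.
have r2 : (2 <= i.+1 <= n - 1)%N by clear -hi n3; lia.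
have Hi := Dk i r1.
have Hi1 := Dk i.+1 r2.
clear Dk.
have hp : 0 < h x i by apply: hpos; clear -hi; lia.
have hx1 : x i.+1 = x i + h x i by rewrite /h addrC subrK.
pose u := t - x i.
have u0 : 0 <= u by rewrite /u subr_ge0; case/andP: ht.
have u1 : u <= h x i by rewrite /u /h lerD2r; case/andP: ht.
pose c1 := u * (h x i - u) ^+ 2 / h x i ^+ 2.
pose c2 := u ^+ 2 * (h x i - u) / h x i ^+ 2.
have DE : Ppiece x f df i t - Ppiece x f dft i t = c2 * e i.+1 - c1 * e i.
  rewrite /Ppiece /c1 /c2 /e /u /slope hx1.
  move: (h x i) hp => hh hhp. field; by rewrite gt_eqF.
have c10 : 0 <= c1 by apply: divr_ge0; [apply: mulr_ge0 => //; apply: sqr_ge0 | apply: sqr_ge0].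
have c20 : 0 <= c2.
  by apply: divr_ge0; [apply: mulr_ge0; [apply: sqr_ge0 | rewrite subr_ge0] | apply: sqr_ge0].
have c1h : c1 <= h x i.
  rewrite /c1 ler_pdivrMr ?exprn_gt0 //.
  move: (h x i) hp u0 u1 => hh hhp u0 u1.
  have a1 : (hh - u) ^+ 2 <= hh ^+ 2.
    rewrite ler_sqr ?nnegrE; lra.
  have := ler_pM u0 (sqr_ge0 (hh - u)) u1 a1.
  done.
have c2h : c2 <= h x i.
  rewrite /c2 ler_pdivrMr ?exprn_gt0 //.
  move: (h x i) hp u0 u1 => hh hhp u0 u1.
  have a1 : u ^+ 2 <= hh ^+ 2 by rewrite ler_sqr ?nnegrE; lra.
  have b0 : 0 <= hh - u by lra.
  have b1 : hh - u <= hh by lra.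
  have := ler_pM (sqr_ge0 u) b0 a1 b1.
  by rewrite [hh ^+ 2 * hh]mulrC.
clearbody c1 c2.
have HB : `|Ppiece x f df i t - Ppiece x f dft i t| <= h x i * (`|e i| + `|e i.+1|).
  rewrite DE; apply: le_trans (ler_normB _ _) _.
  rewrite !normrM (ger0_norm c10) (ger0_norm c20).
  have := ler_wpM2r (normr_ge0 (e i.+1)) c2h.
  have := ler_wpM2r (normr_ge0 (e i)) c1h.
  lra.
apply: le_trans HB _.
have q0 : (0 : R) < 2 ^+ i by apply: exprn_gt0.
have r0 : (0 : R) < 2 ^+ (n - i) by apply: exprn_gt0.
have En : (2 : R) ^+ n = 2 ^+ i * 2 ^+ (n - i) by rewrite -exprD subnKC //; clear -hi; lia.
rewrite En exprS in Hi1.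
rewrite En in Hi.
rewrite -/(e 1%N) -/(e n).
have -> : (2 ^+ i)^-1 * lam x 1 * `|e 1%N| + mu x (n - 2) * (2 ^+ (n - i))^-1 * `|e n|
  = (lam x 1 * `|e 1%N|) / 2 ^+ i + (mu x (n - 2) * `|e n|) / 2 ^+ (n - i) by ring.
move: Hi Hi1 hA0 hB0; move: (lam x 1 * `|e 1%N|) (mu x (n - 2) * `|e n|) => L Mu.
clear En; move: (2 ^+ i) (2 ^+ (n - i)) q0 r0 => q r q0 r0 Hi Hi1 L0 M0.
have S : `|e i| + `|e i.+1| <= 4 * (L / q) + 4 * (Mu / r).
  have E1 : 8/3*L/q + 4/3*Mu/(q*r)*q = 8/3*(L/q) + 4/3*(Mu/r) by field; rewrite !gt_eqF.
  have E2 : 8/3*L/(2*q) + 4/3*Mu/(q*r)*(2*q) = 4/3*(L/q) + 8/3*(Mu/r) by field; rewrite !gt_eqF.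
  lra.
apply: le_trans (ler_wpM2l (ltW hp) S) _.
have a0 : 0 <= L / q by rewrite divr_ge0 // ltW.
have b0 : 0 <= Mu / r by rewrite divr_ge0 // ltW.
have P : 0 <= h x i * (L / q + Mu / r) by apply: mulr_ge0; [exact: ltW | exact: addr_ge0].
have F1 : h x i * (4 * (L / q) + 4 * (Mu / r)) = 4 * (h x i * (L / q + Mu / r)) by ring.
have F2 : 8 * h x i * (L / q + Mu / r) = 8 * (h x i * (L / q + Mu / r)) by ring.
lra.
Qed.
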